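(* Let $V\colon \mathbf{ZZ}\to\mathbf{Vec}$ be a nonzero zigzag persistence module. Then $V$ is indecomposable if and only if $V$ is $[-k,k]$-indecomposable for every integer $k\geq 0$.
   Context: Fix a field $\mathbb{F}$; $\mathbf{Vec}$ denotes the category of finite-dimensional $\mathbb{F}$-vector spaces. $\mathbf{ZZ}$ is the category whose objects are the integers, with non-identity morphisms $i\to i-1$ and $i\to i+1$ for every even integer $i$ (even integers are sources, odd integers are sinks). A zigzag persistence module is a functor $V\colon\mathbf{ZZ}\to\mathbf{Vec}$, i.e. finite-dimensional spaces $V_i$ ($i\in\mathbb{Z}$) together with linear maps $g_i=V(i\to i-1)\colon V_i\to V_{i-1}$ and $f_i=V(i\to i+1)\colon V_i\to V_{i+1}$ for each even $i$. Morphisms are natural transformations. The direct sum $U\oplus W$ is defined pointwise: $(U\oplus W)_i=U_i\oplus W_i$, $(U\oplus W)(\alpha)=U(\alpha)\oplus W(\alpha)$. $V$ is decomposable if $V\cong U\oplus W$ with $U,W$ both nonzero, and indecomposable otherwise. For integers $s\leq t$, a nonzero $W$ is $[s,t]$-indecomposable if for every decomposition $W=W^1\oplus W^2$ (into submodules), either $W^1_i=0$ for all $s\le i\le t$, or $W^2_i=0$ for all $s\le i\le t$. *)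

(* Defs.v *)
(* Finite-dimensional F-vector spaces are modelled as F^n
   (row vectors of length n); linear maps F^m -> F^n as matrices 'M_(m,n)
   acting on the right (v *m A). *)
From HB Require Import structures.
From mathcomp Require Import all_boot all_order all_algebra.
Set Implicit Arguments. Unset Strict Implicit. Unset Printing Implicit Defensive.
Import GRing.Theory Num.Theory.
Local Open Scope ring_scope.

(* A zigzag persistence module ZZ -> Vec.  Even integers 2k are sources,
   with maps g k : V_{2k} -> V_{2k-1} and f k : V_{2k} -> V_{2k+1}. *)
Record zz (F : fieldType) := ZZ {
  zdim : int -> nat;
  zg : forall k : int, 'M[F]_(zdim (2 * k), zdim (2 * k - 1));
  zf : forall k : int, 'M[F]_(zdim (2 * k), zdim (2 * k + 1))
}.

Section ZZDefs.
Variable F : fieldType.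

Definition zz_nonzero (V : zz F) : Prop := exists i : int, zdim V i != 0%N.

Definition zz_morph (U W : zz F) (phi : forall i : int, 'M[F]_(zdim U i, zdim W i)) : Prop :=
  forall k : int,
    zg U k *m phi (2 * k - 1) = phi (2 * k) *m zg W k /\
    zf U k *m phi (2 * k + 1) = phi (2 * k) *m zf W k.

Definition zz_iso (U W : zz F) : Prop :=
  exists (phi : forall i : int, 'M[F]_(zdim U i, zdim W i))
         (psi : forall i : int, 'M[F]_(zdim W i, zdim U i)),
    [/\ zz_morph phi, zz_morph psi,
        forall i, phi i *m psi i = 1%:M & forall i, psi i *m phi i = 1%:M].

Definition zz_sum (U W : zz F) : zz F :=
  @ZZ F (fun i => (zdim U i + zdim W i)%N)
    (fun k => block_mx (zg U k) 0 0 (zg W k))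
    (fun k => block_mx (zf U k) 0 0 (zf W k)).

Definition zz_decomposable (V : zz F) : Prop :=
  exists U W : zz F, [/\ zz_nonzero U, zz_nonzero W & zz_iso V (zz_sum U W)].

Definition zz_indecomposable (V : zz F) : Prop := ~ zz_decomposable V.

(* A submodule of V: a family of subspaces (row spaces) S_i of V_i
   stable under the structure maps. *)
Definition zz_submod (V : zz F) (S : forall i : int, 'M[F]_(zdim V i)) : Prop :=
  forall k : int,
    submx (S (2 * k) *m zg V k) (S (2 * k - 1)) /\
    submx (S (2 * k) *m zf V k) (S (2 * k + 1)).

Definition zz_internal_decomp (V : zz F) (S1 S2 : forall i : int, 'M[F]_(zdim V i)) : Prop :=
  [/\ zz_submod S1, zz_submod S2 &
      forall i : int, (S1 i + S2 i == 1%:M)%MS && (S1 i :&: S2 i == (0 : 'M[F]_(zdim V i)))%MS].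

Definition zz_interval_indec (V : zz F) (s t : int) : Prop :=
  zz_nonzero V /\
  forall S1 S2 : forall i : int, 'M[F]_(zdim V i),
    zz_internal_decomp S1 S2 ->
    (forall i : int, s <= i <= t -> (S1 i == (0 : 'M[F]_(zdim V i)))%MS) \/
    (forall i : int, s <= i <= t -> (S2 i == (0 : 'M[F]_(zdim V i)))%MS).

End ZZDefs.

(* Main.v *)
Require Import Defs.
From HB Require Import structures.
From mathcomp Require Import all_boot all_order all_algebra.
From Stdlib Require Import Classical.
From mathcomp Require Import zify.
Set Implicit Arguments. Unset Strict Implicit.
Import GRing.Theory Num.Theory.
Local Open Scope ring_scope.

Section Aux.
Variable F : fieldType.

Lemma morph_inv (U W : zz F) (phi : forall i, 'M[F]_(zdim U i, zdim W i))
  (psi : forall i, 'M[F]_(zdim W i, zdim U i)) :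
  zz_morph psi -> (forall i, phi i *m psi i = 1%:M) ->
  (forall i, psi i *m phi i = 1%:M) -> zz_morph phi.
Proof.
move=> Hm Hpp Hqp k; have [Hg Hf] := Hm k; split.
  by rewrite -[RHS]mulmx1 -(Hqp (2*k-1)) !mulmxA -(mulmxA (phi _)) Hg mulmxA Hpp mul1mx.
by rewrite -[RHS]mulmx1 -(Hqp (2*k+1)) !mulmxA -(mulmxA (phi _)) Hf mulmxA Hpp mul1mx.
Qed.

Section Sub.
Variables (V : zz F) (S : forall i : int, 'M[F]_(zdim V i)).
Hypothesis HS : zz_submod S.

Definition sub_zz : zz F :=
  @ZZ F (fun i => \rank (S i))
    (fun k => row_base (S (2*k)) *m zg V k *m pinvmx (row_base (S (2*k-1))))
    (fun k => row_base (S (2*k)) *m zf V k *m pinvmx (row_base (S (2*k+1)))).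

Lemma sub_zz_g k : zg sub_zz k *m row_base (S (2*k-1)) = row_base (S (2*k)) *m zg V k.
Proof.
rewrite /= mulmxKpV //.
by rewrite (eqmxMr _ (eq_row_base _)) eq_row_base; exact: (HS k).1.
Qed.

Lemma sub_zz_f k : zf sub_zz k *m row_base (S (2*k+1)) = row_base (S (2*k)) *m zf V k.
Proof.
rewrite /= mulmxKpV //.
by rewrite (eqmxMr _ (eq_row_base _)) eq_row_base; exact: (HS k).2.
Qed.
End Sub.

Lemma rank0_eqmx n (A : 'M[F]_n) : (A == (0 : 'M_n))%MS -> \rank A = 0%N.
Proof. by move/eqmxP=> ->; rewrite mxrank0. Qed.

Lemma internal_to_external (V : zz F) (S1 S2 : forall i : int, 'M[F]_(zdim V i)) :
  zz_internal_decomp S1 S2 -> zz_iso V (zz_sum (sub_zz S1) (sub_zz S2)).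
Proof.
case=> H1 H2 Hd.
pose B i : 'M[F]_(\rank (S1 i) + \rank (S2 i), zdim V i) :=
  col_mx (row_base (S1 i)) (row_base (S2 i)).
have BE i : (B i :=: S1 i + S2 i)%MS.
  by apply: eqmx_trans (eqmx_sym (addsmxE _ _)) (adds_eqmx (eq_row_base _) (eq_row_base _)).
have full i : (1%:M <= B i)%MS.
  by rewrite BE; case/andP: (Hd i) => /andP[_ ->].
have pB i : pinvmx (B i) *m B i = 1%:M.
  by have := mulmxKpV (full i); rewrite mul1mx.
have freeB i : row_free (B i).
  rewrite /row_free BE.
  have := mxrank_sum_cap (S1 i) (S2 i).
  case/andP: (Hd i) => _ /rank0_eqmx ->; rewrite addn0 => ->.
  by [].
have Bp i : B i *m pinvmx (B i) = 1%:M.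
  by apply: (row_free_inj (freeB i)); rewrite /= mul1mx -mulmxA pB mulmx1.
have mB : zz_morph (U := zz_sum (sub_zz S1) (sub_zz S2)) (W := V) B.
  move=> k; split; rewrite /= /B mul_block_col !mul0mx addr0 add0r mul_col_mx.
    by rewrite sub_zz_g // sub_zz_g.
  by rewrite sub_zz_f // sub_zz_f.
exists (fun i => pinvmx (B i)), B; split => //.
exact: (morph_inv mB).
Qed.

Section Ext.
Variables (V U W : zz F).
Variables (phi : forall i, 'M[F]_(zdim V i, zdim (zz_sum U W) i))
          (psi : forall i, 'M[F]_(zdim (zz_sum U W) i, zdim V i)).
Hypotheses (mpsi : zz_morph psi) (Hpp : forall i, phi i *m psi i = 1%:M)
  (Hqp : forall i, psi i *m phi i = 1%:M).

Definition X1 i : 'M[F]_(zdim U i, zdim V i) :=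
  row_mx (1%:M : 'M_(zdim U i)) (0 : 'M_(zdim U i, zdim W i)) *m psi i.
Definition X2 i : 'M[F]_(zdim W i, zdim V i) :=
  row_mx (0 : 'M_(zdim W i, zdim U i)) (1%:M : 'M_(zdim W i)) *m psi i.
Definition T1 i : 'M[F]_(zdim V i) := <<X1 i>>%MS.
Definition T2 i : 'M[F]_(zdim V i) := <<X2 i>>%MS.

Lemma T_decomp : zz_internal_decomp T1 T2.
Proof.
split.
- move=> k; have [Hg Hf] := mpsi k; rewrite /T1 !genmxE.
  split.
    rewrite (eqmxMr _ (genmxE _)) /X1 /X2 -mulmxA -Hg mulmxA /= mul_row_block !mul0mx !mulmx0 !mul1mx addr0 add0r.
    have -> : row_mx (zg U k) 0 = zg U k *m row_mx (1%:M : 'M[F]_(zdim U (2*k-1))) (0 : 'M[F]_(zdim U (2*k-1), zdim W (2*k-1))) by rewrite mul_mx_row mulmx1 mulmx0.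
    by rewrite -mulmxA submxMl.
  rewrite (eqmxMr _ (genmxE _)) /X1 /X2 -mulmxA -Hf mulmxA /= mul_row_block !mul0mx !mulmx0 !mul1mx addr0 add0r.
    have -> : row_mx (zf U k) 0 = zf U k *m row_mx (1%:M : 'M[F]_(zdim U (2*k+1))) (0 : 'M[F]_(zdim U (2*k+1), zdim W (2*k+1))) by rewrite mul_mx_row mulmx1 mulmx0.
    by rewrite -mulmxA submxMl.
- move=> k; have [Hg Hf] := mpsi k; rewrite /T2 !genmxE.
  split.
    rewrite (eqmxMr _ (genmxE _)) /X1 /X2 -mulmxA -Hg mulmxA /= mul_row_block !mul0mx !mulmx0 !mul1mx addr0 add0r.
    have -> : row_mx 0 (zg W k) = zg W k *m row_mx (0 : 'M[F]_(zdim W (2*k-1), zdim U (2*k-1))) (1%:M : 'M[F]_(zdim W (2*k-1))) by rewrite mul_mx_row mulmx1 mulmx0.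
    by rewrite -mulmxA submxMl.
  rewrite (eqmxMr _ (genmxE _)) /X1 /X2 -mulmxA -Hf mulmxA /= mul_row_block !mul0mx !mulmx0 !mul1mx addr0 add0r.
    have -> : row_mx 0 (zf W k) = zf W k *m row_mx (0 : 'M[F]_(zdim W (2*k+1), zdim U (2*k+1))) (1%:M : 'M[F]_(zdim W (2*k+1))) by rewrite mul_mx_row mulmx1 mulmx0.
    by rewrite -mulmxA submxMl.
- move=> i.
  have E : (T1 i + T2 i :=: psi i)%MS.
    apply: eqmx_trans (adds_eqmx (genmxE _) (genmxE _)) _.
    apply: eqmx_trans (addsmxE _ _) _.
    by rewrite /X1 /X2 -mul_col_mx -[col_mx _ _]/(block_mx _ _ _ _) -scalar_mx_block mul1mx.
  have fpsi : row_full (psi i) by apply/row_fullP; exists (phi i).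
  have Hs : (T1 i + T2 i == 1%:M)%MS by rewrite submx1 E sub1mx.
  rewrite Hs /=.
  have r1 : (\rank (T1 i) <= zdim U i)%N by rewrite genmxE rank_leq_row.
  have r2 : (\rank (T2 i) <= zdim W i)%N by rewrite genmxE rank_leq_row.
  have rn : (zdim U i + zdim W i <= zdim V i)%N.
    have := mxrankM_maxl (psi i) (phi i); rewrite Hqp mxrank1 => h.
    exact: leq_trans h (rank_leq_col _).
  have rs : \rank (T1 i + T2 i) = zdim V i by rewrite E; apply/eqP.
  have := mxrank_sum_cap (T1 i) (T2 i); rewrite rs => h.
  have : \rank (T1 i :&: T2 i) = 0%N.
    have := leq_add r1 r2; rewrite -h => h2.
    have := leq_trans h2 rn; move: (\rank (T1 i :&: T2 i)) => r.
    by case: r => // r; rewrite addnS ltnNge leq_addr.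
  move/eqP; rewrite mxrank_eq0 => /eqP ->.
  by rewrite submx_refl.
Qed.

Lemma T1_nz i : zdim U i != 0%N -> ~~ (T1 i == (0 : 'M_(zdim V i)))%MS.
Proof.
move=> nz; apply/negP => /andP[h _].
move: h; rewrite /T1 genmxE => /submx0null h.
have : row_mx (1%:M : 'M[F]_(zdim U i)) (0 : 'M_(zdim U i, zdim W i)) = 0.
  by rewrite -[LHS]mulmx1 -Hqp mulmxA -/(X1 i) h mul0mx.
move/(congr1 lsubmx); rewrite row_mxKl => e.
have := mxrank1 F (zdim U i); rewrite e.
have -> : lsubmx (0 : 'M[F]_(zdim U i, zdim U i + zdim W i)) = 0.
  by apply/matrixP=> a b; rewrite !mxE.
by rewrite mxrank0 => e2; move: nz; rewrite -e2.
Qed.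

Lemma T2_nz i : zdim W i != 0%N -> ~~ (T2 i == (0 : 'M_(zdim V i)))%MS.
Proof.
move=> nz; apply/negP => /andP[h _].
move: h; rewrite /T2 genmxE => /submx0null h.
have : row_mx (0 : 'M_(zdim W i, zdim U i)) (1%:M : 'M[F]_(zdim W i)) = 0.
  by rewrite -[LHS]mulmx1 -Hqp mulmxA -/(X2 i) h mul0mx.
move/(congr1 rsubmx); rewrite row_mxKr => e.
have := mxrank1 F (zdim W i); rewrite e.
have -> : rsubmx (0 : 'M[F]_(zdim W i, zdim U i + zdim W i)) = 0.
  by apply/matrixP=> a b; rewrite !mxE.
by rewrite mxrank0 => e2; move: nz; rewrite -e2.
Qed.
End Ext.
End Aux.

Unset Implicit Arguments.
Theorem lemma1 (F : fieldType) (V : zz F) :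
  zz_nonzero V ->
  (zz_indecomposable V <-> forall k : nat, zz_interval_indec V (- (k%:Z)) (k%:Z)).
Proof.
move=> Vnz; split.
- move=> Hind k; split => // S1 S2 Hd.
  case: (classic (forall i, (S1 i == (0 : 'M[F]_(zdim V i)))%MS)) => [h|h1]; first by left => i _; exact: h.
  case: (classic (forall i, (S2 i == (0 : 'M[F]_(zdim V i)))%MS)) => [h|h2]; first by right => i _; exact: h.
  exfalso; apply: Hind; exists (sub_zz S1), (sub_zz S2); split; last exact: internal_to_external.
    case: (not_all_ex_not _ _ h1) => i hi; exists i; apply/negP => /= e; apply: hi.
    by move: e; rewrite mxrank_eq0 => /eqP ->; rewrite submx_refl.
  case: (not_all_ex_not _ _ h2) => i hi; exists i; apply/negP => /= e; apply: hi.
  by move: e; rewrite mxrank_eq0 => /eqP ->; rewrite submx_refl.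
- move=> H [U [W [[i Hi] [j Hj] [phi [psi [m1 m2 h1 h2]]]]]].
  have [_ /(_ _ _ (T_decomp m2 h1 h2))] := H (`|i| + `|j|)%N.
  case=> hh.
    apply: (negP (T1_nz h2 Hi)); apply: hh; apply/andP; split; lia.
  apply: (negP (T2_nz h2 Hj)); apply: hh; apply/andP; split; lia.
Qed.
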